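(* Suppose an SCC $F:\Theta\to 2^Z\setminus\{\emptyset\}$ is mixed-Nash-A-implemented by $\mathcal M=\langle M,g\rangle$. Then $g(M)\subseteq\Delta(Z^* )$.
   Context: Standing setup: $\mathcal I=\{1,\dots,I\}$ finite, $I\ge 3$; $\Theta$ finite or countably infinite; $Z$ finite; $Y=\Delta(Z)$; $u_i^\theta:Z\to\mathbb R$, $U_i^\theta(y)=\sum_zy_zu_i^\theta(z)$. A mechanism $\mathcal M=\langle M=\times_iM_i,g:M\to Y\rangle$ has countable $M_i$; $g(\lambda)$ is the induced lottery; $MNE^{(\mathcal M,\theta)}$ is the set of mixed Nash equilibria at $\theta$. $F$ is mixed-Nash-A-implemented by $\mathcal M$ if $\bigcup_{\lambda\in MNE^{(\mathcal M,\theta)}}\mathrm{SUPP}(g[\lambda])=F(\theta)$ for all $\theta$. A nonempty $E\subseteq Z$ is an $i$-$\theta$-max set if $E\subseteq\arg\max_{z\in E}u_i^\theta(z)$ and $E\subseteq\arg\max_{z\in Z}u_j^\theta(z)$ for all $j\ne i$; an $i$-max set if it is such for some $\theta$. $Z^*=\bigcup_{\theta\in\Theta}F(\theta)$ if $Z$ is an $i$-max set for some $i\in\mathcal I$, and $Z^*=Z$ otherwise. *)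

(* Defs.v *)
From HB Require Import structures.
From mathcomp Require Import all_boot all_order all_algebra.
From mathcomp Require Import boolp classical_sets reals ereal esum.
Set Implicit Arguments.
Unset Strict Implicit.
Unset Printing Implicit Defensive.
Import Order.TTheory GRing.Theory Num.Theory.
Local Open Scope ring_scope.

Section Defs.
Variables (R : realType) (n : nat) (Theta : countType) (Z : finType).

Definition is_lottery (y : Z -> R) : Prop :=
  (forall z, 0 <= y z) /\ \sum_(z : Z) y z = 1.

Definition expU (u : 'I_n -> Theta -> Z -> R) (i : 'I_n) (th : Theta)
  (y : Z -> R) : R := \sum_(z : Z) y z * u i th z.

Variable (Mi : 'I_n -> countType).
Definition profile := {dffun forall i : 'I_n, Mi i}.

Definition is_mixed (i : 'I_n) (l : Mi i -> R) : Prop :=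
  (forall m, 0 <= l m) /\ (esum [set: Mi i] (fun m => (l m)%:E) = 1%E).

Definition mprofile := forall i : 'I_n, Mi i -> R.

Definition induced (g : profile -> Z -> R) (lam : mprofile) (z : Z) : R :=
  fine (esum [set: profile]
          (fun m => ((\prod_(i < n) lam i (m i)) * g m z)%:E)).

Definition is_MNE (u : 'I_n -> Theta -> Z -> R) (g : profile -> Z -> R)
  (th : Theta) (lam : mprofile) : Prop :=
  (forall i, is_mixed (lam i)) /\
  (forall (i : 'I_n) (mu : Mi i -> R), is_mixed mu ->
     expU u i th (induced g (dfwith lam mu)) <= expU u i th (induced g lam)).

Definition SUPP (y : Z -> R) : {set Z} := [set z | 0 < y z].

Definition mixedNashA_implements (u : 'I_n -> Theta -> Z -> R)
  (F : Theta -> {set Z}) (g : profile -> Z -> R) : Prop :=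
  forall th z, (exists lam, is_MNE u g th lam /\ z \in SUPP (induced g lam))
               <-> z \in F th.
End Defs.

Section MaxSets.
Variables (R : realType) (n : nat) (Theta : countType) (Z : finType).
Variable (u : 'I_n -> Theta -> Z -> R).

Definition is_max_set_at (i : 'I_n) (th : Theta) (E : {set Z}) : Prop :=
  E != finset.set0 /\
  (forall x, x \in E -> forall y, y \in E -> u i th y <= u i th x) /\
  (forall j : 'I_n, j != i -> forall x, x \in E -> forall y : Z,
       u j th y <= u j th x).

Definition is_max_set (i : 'I_n) (E : {set Z}) : Prop :=
  exists th, is_max_set_at i th E.

Definition Zstar (F : Theta -> {set Z}) (z : Z) : Prop :=
  if `[< exists i, is_max_set i (finset.setT : {set Z}) >] then exists th, z \in F th
  else True.
End MaxSets.

(* Main.v *)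
Require Import Defs.
From HB Require Import structures.
From mathcomp Require Import all_boot all_order all_algebra.
From mathcomp Require Import boolp classical_sets reals ereal esum.
Import Order.TTheory GRing.Theory Num.Theory.
Local Open Scope ring_scope.

Lemma esum_only (R : realType) (T : choiceType) (t : T) (a : T -> \bar R) :
  (forall x, x != t -> a x = 0%E) -> (0 <= a t)%E ->
  esum [set: T] a = a t.
Proof.
move=> a0 at0.
rewrite (esumID [set t]); last first.
  by move=> x _; case: (eqVneq x t) => [->//|/a0 ->].
rewrite setTI esum_set1 // esum1 ?adde0 // => x [_ /=] xt.
by apply: a0; apply/eqP.
Qed.

Section Key.
Variables (R : realType) (n : nat) (Z : finType) (Mi : 'I_n -> countType).
Variable (g : profile Mi -> Z -> R).
Hypothesis g0 : forall m z, 0 <= g m z.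
Variable (m : profile Mi).

Definition dm : mprofile R Mi := fun i x => if x == m i then 1 else 0.

Lemma dm_ge0 i x : 0 <= dm i x.
Proof. by rewrite /dm; case: ifP. Qed.

Definition upd (i : 'I_n) (x : Mi i) : profile Mi :=
  [ffun j => dfwith (fun j => m j) x j].
Arguments upd {i}.

Lemma upd_i (i : 'I_n) (x : Mi i) : upd x i = x.
Proof. by rewrite /upd ffunE dfwith_in. Qed.

Lemma upd_out (i : 'I_n) (x : Mi i) j : i != j -> upd x j = m j.
Proof. by move=> ij; rewrite /upd ffunE dfwith_out. Qed.

Lemma upd_m i : upd (m i) = m.
Proof.
apply/ffunP => j; case: (eqVneq i j) => [<-|ij]; first by rewrite upd_i.
by rewrite upd_out.
Qed.

Lemma key (i : 'I_n) (lam : mprofile R Mi) z :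
  (forall x, 0 <= lam i x) -> (forall k, k != i -> lam k = dm k) ->
  esum [set: profile Mi] (fun p => ((\prod_(k < n) lam k (p k)) * g p z)%:E) =
  esum [set: Mi i] (fun x => (lam i x * g (upd x) z)%:E).
Proof.
move=> l0 lk.
have lge0 k : forall y, 0 <= lam k y.
  by case: (eqVneq k i) => [->|/lk ->]; [apply: l0|apply: dm_ge0].
rewrite (esumID (range (@upd i))); last first.
  by move=> p _; rewrite lee_fin mulr_ge0 // prodr_ge0.
rewrite [X in (_ + X)%E]esum1 ?adde0; last first.
  move=> p [_ /= nr].
  have [k [ki pk]] : exists k, k != i /\ p k != m k.
    apply: contrapT => hne; apply: nr; exists (p i) => //.
    apply/ffunP => j; case: (eqVneq i j) => [<-|ij]; first by rewrite upd_i.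
    rewrite upd_out //; apply/eqP; apply: contrapT => /negP pj.
    by apply: hne; exists j; split => //; rewrite eq_sym.
  rewrite (bigD1 k) //= lk // /dm (negPf pk) mul0r mul0r //.
rewrite setTI esum_image; last first.
  by move=> x y _ _ e; rewrite -(upd_i _ x) -(upd_i _ y) e.
apply: eq_esum => x _; congr (_ * _)%:E.
rewrite (bigD1 i) //= upd_i big1 ?mulr1 // => k ki.
by rewrite lk // upd_out 1?eq_sym // /dm eqxx.
Qed.

Lemma induced_dm (i : 'I_n) z : induced g dm z = g m z.
Proof.
rewrite /induced (@key i dm) //; last by move=> x; apply: dm_ge0.
rewrite (@esum_only _ _ (m i)); first by rewrite /dm eqxx mul1r upd_m.
  by move=> x xm; rewrite /dm (negPf xm) mul0r.
by rewrite lee_fin mulr_ge0 // dm_ge0.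
Qed.

Hypothesis gsum : forall p, \sum_(z : Z) g p z = 1.

Lemma g_le1 p z : g p z <= 1.
Proof.
rewrite -(gsum p) (bigD1 z) //= lerDl sumr_ge0 // => *; exact: g0.
Qed.

Lemma dev_sum (i : 'I_n) (mu : Mi i -> R) : is_mixed mu ->
  \sum_(z : Z) induced g (dfwith dm mu) z = 1.
Proof.
move=> [mu0 mu1].
have E z : induced g (dfwith dm mu) z =
    fine (esum [set: Mi i] (fun x => (mu x * g (upd x) z)%:E)).
  rewrite /induced (@key i) //.
  - by congr fine; apply: eq_esum => x _; rewrite dfwith_in.
  - by move=> x; rewrite dfwith_in.
  - by move=> k ki; rewrite dfwith_out // eq_sym.
under eq_bigr do rewrite E.
apply: EFin_inj; rewrite EFin_sum_fine; last first.
  move=> z _; rewrite ge0_fin_numE; last first.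
    by apply: esum_ge0 => x _; rewrite lee_fin mulr_ge0.
  apply: (@le_lt_trans _ _ 1%E); last by rewrite ltry.
  rewrite -mu1; apply: le_esum => x _; rewrite lee_fin.
  by rewrite ler_piMr // g_le1.
rewrite -esum_sum; last by move=> x z _ _; rewrite lee_fin mulr_ge0.
rewrite -mu1; apply: eq_esum => x _.
by rewrite sumEFin -mulr_sumr gsum mulr1.
Qed.
End Key.

Theorem lemma5 (R : realType) (n : nat) (Theta : countType) (Z : finType)
  (u : 'I_n -> Theta -> Z -> R) (F : Theta -> {set Z})
  (Mi : 'I_n -> countType) (g : profile Mi -> Z -> R) :
  (3 <= n)%N ->
  (forall th, F th != finset.set0) ->
  (forall m, is_lottery (g m)) ->
  mixedNashA_implements u F g ->
  forall (m : profile Mi) (z : Z), 0 < g m z -> Zstar u F z.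
Proof.
move=> _ _ glot impl m z gmz.
rewrite /Zstar; case: asboolP => // -[i [th [_ [Hi Hj]]]].
have g0 p w : 0 <= g p w by case: (glot p).
have gsum p : \sum_(w : Z) g p w = 1 by case: (glot p).
have uc j w : u j th w = u j th z.
  case: (eqVneq j i) => [->|ji].
    by apply/eqP; rewrite eq_le !Hi ?in_setT.
  by apply/eqP; rewrite eq_le !(Hj j ji) ?in_setT.
have EU j y : expU u j th y = (\sum_(w : Z) y w) * u j th z.
  by rewrite /expU mulr_suml; apply: eq_bigr => w _; rewrite uc.
exists th; apply/(impl th z).
exists (@dm _ _ _ m); split; last by rewrite /SUPP inE (@induced_dm _ _ _ _ _ g0 m i).
split.
  move=> k; split; first by move=> x; apply: dm_ge0.
  rewrite (@esum_only _ _ (m k)); first by rewrite /dm eqxx.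
    by move=> x xm; rewrite /dm (negPf xm).
  by rewrite lee_fin dm_ge0.
move=> k mu hmu.
rewrite !EU (@dev_sum _ _ _ _ _ g0 m gsum k mu hmu).
have -> : \sum_(w : Z) induced g (@dm _ _ _ m) w = 1.
  by under eq_bigr do rewrite (@induced_dm _ _ _ _ _ g0 m i); rewrite gsum.
by [].
Qed.
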